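(* Let $(X,G)$ be a minimal continuous action and $m\in\mathbb{N}$, $m\geq 2$. If $(X,G)$ is almost $m$-equicontinuous, then $(X,G)$ is $m$-equicontinuous.
   Context: $G$ is a locally compact topological group acting continuously on a compact metric space $(X,d)$; minimal means every orbit is dense. A point $x\in X$ is an $m$-equicontinuity point if for every $\varepsilon>0$ there is $\delta>0$ such that for any $x_1,\dots,x_m$ in the open ball $B_\delta(x)$ and every $g\in G$ there exist $i\neq j$ in $\{1,\dots,m\}$ with $d(gx_i,gx_j)<\varepsilon$; $E^m(X,G)$ is the set of such points. $(X,G)$ is $m$-equicontinuous if $E^m(X,G)=X$, and almost $m$-equicontinuous if $E^m(X,G)$ is residual in $X$. *)

(* Defs.v *)
From HB Require Import structures.
From mathcomp Require Import all_boot all_order all_algebra.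
From mathcomp Require Import all_classical all_reals all_analysis.
Set Implicit Arguments. Unset Strict Implicit. Unset Printing Implicit Defensive.
Import Order.TTheory GRing.Theory Num.Theory.
Local Open Scope classical_set_scope.
Local Open Scope ring_scope.

Definition is_topological_group (G : topologicalType)
  (mul : G -> G -> G) (inv : G -> G) (e : G) : Prop :=
  [/\ (forall a b c, mul a (mul b c) = mul (mul a b) c),
      (forall a, mul e a = a /\ mul a e = a),
      (forall a, mul (inv a) a = e /\ mul a (inv a) = e),
      continuous (fun p : G * G => mul p.1 p.2)
    & continuous inv].

Definition is_metric_for (R : realType) (X : topologicalType)
  (d : X -> X -> R) : Prop :=
  [/\ (forall x y, d x y = 0 <-> x = y),
      (forall x y, d x y = d y x),
      (forall x y z, d x z <= d x y + d y z)
    & (forall A : set X,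
         open A <-> (forall x, A x -> exists2 r : R, 0 < r &
                       forall y, d x y < r -> A y))].

Definition is_continuous_action (G X : topologicalType)
  (mul : G -> G -> G) (e : G) (act : G -> X -> X) : Prop :=
  [/\ (forall x, act e x = x),
      (forall g h x, act (mul g h) x = act g (act h x))
    & continuous (fun p : G * X => act p.1 p.2)].

Definition minimal_action (G X : topologicalType) (act : G -> X -> X) : Prop :=
  forall x : X, dense (range (fun g : G => act g x)).

Definition residual (X : topologicalType) (E : set X) : Prop :=
  exists F : nat -> set X,
    (forall n, open (F n) /\ dense (F n)) /\ \bigcap_n F n `<=` E.

Definition m_equicontinuity_point (R : realType) (G X : Type)
  (d : X -> X -> R) (act : G -> X -> X) (m : nat) (x : X) : Prop :=
  forall eps : R, 0 < eps -> exists2 delta : R, 0 < delta &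
    forall xs : 'I_m -> X, (forall i, d x (xs i) < delta) ->
      forall g : G, exists i j : 'I_m,
        i != j /\ d (act g (xs i)) (act g (xs j)) < eps.

Definition Em (R : realType) (G X : Type)
  (d : X -> X -> R) (act : G -> X -> X) (m : nat) : set X :=
  [set x | m_equicontinuity_point d act m x].

Definition m_equicontinuous (R : realType) (G X : Type)
  (d : X -> X -> R) (act : G -> X -> X) (m : nat) : Prop :=
  Em d act m = [set: X].

Definition almost_m_equicontinuous (R : realType) (G : Type) (X : topologicalType)
  (d : X -> X -> R) (act : G -> X -> X) (m : nat) : Prop :=
  residual (Em d act m).

(* Main.v *)
Require Import Defs.
From HB Require Import structures.
From mathcomp Require Import all_boot all_order all_algebra.
From mathcomp Require Import all_classical all_reals all_analysis.
From mathcomp Require Import lra.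
Import Order.TTheory GRing.Theory Num.Theory.
Local Open Scope classical_set_scope.
Local Open Scope ring_scope.

Section M.
Variables (R : realType) (X : topologicalType) (d : X -> X -> R).
Hypothesis hd : is_metric_for d.

Lemma d_ge0 x y : 0 <= d x y.
Proof.
case: hd => h0 hs ht _.
have := ht x y x; rewrite (proj2 (h0 x x) erefl) hs => H.
have : 0 <= d y x *+ 2 by rewrite mulr2n.
by rewrite pmulrn_lge0.
Qed.

Lemma ball_open x r : open [set y | d x y < r].
Proof.
case: hd => h0 hs ht ho; apply/ho => z /= Hz.
exists (r - d x z); first by rewrite subr_gt0.
move=> y Hy; have := ht x z y; lra.
Qed.

Lemma open_rad A x : open A -> A x -> exists2 r : R, 0 < r & forall y, d x y < r -> A y.
Proof. by case: hd => _ _ _ ho /ho; apply. Qed.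

Lemma cball_closed x r : closed [set y | d x y <= r].
Proof.
rewrite -openC; case: hd => h0 hs ht ho; apply/ho => z /= Hz.
have Hz' : r < d x z by rewrite ltNge; apply/negP.
exists (d x z - r); first by rewrite subr_gt0.
move=> y Hy; apply/negP; rewrite -ltNge.
have := ht x y z; rewrite (hs y z); lra.
Qed.

Lemma nbhs_rad A x : nbhs x A -> exists2 r : R, 0 < r & forall y, d x y < r -> A y.
Proof.
rewrite nbhsE => -[B [oB Bx] BA].
have [r r0 H] := @open_rad B x oB Bx.
by exists r => // y /H /BA.
Qed.

Lemma ball_nbhs x r : 0 < r -> nbhs x [set y | d x y < r].
Proof.
move=> r0; apply: open_nbhs_nbhs; split; first exact: ball_open.
by rewrite /= (proj2 (let: And4 h _ _ _ := hd in h x x) erefl).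
Qed.
End M.

Lemma act_cont (G X : topologicalType) (act : G -> X -> X) g y :
  continuous (fun p : G * X => act p.1 p.2) -> {for y, continuous (act g)}.
Proof.
move=> c.
have h : (fun z => (g, z)) @ y --> (g, y) by apply: cvg_pair; [exact: cvg_cst | exact: cvg_id].
have := cvg_comp _ _ h (c (g, y)).
move=> H. exact H.
Qed.

Section Baire.
Variables (R : realType) (X : topologicalType) (d : X -> X -> R).
Hypothesis hd : is_metric_for d.
Hypothesis hc : compact [set: X].

Lemma baire_pt (F : nat -> set X) (z : X) :
  (forall n, open (F n) /\ dense (F n)) -> exists p, forall n, F n p.
Proof.
move=> HF.
have step : forall np : nat * (X * R), exists q : X * R, 0 < np.2.2 ->
   0 < q.2 /\ (forall w, d q.1 w <= q.2 -> F np.1 w /\ d np.2.1 w <= np.2.2).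
  move=> [n [x r]] /=.
  case: (boolP (0 < r)) => hr; last by exists (x, r).
  have [w [Bw Fw]] : [set v | d x v < r / 2] `&` F n !=set0.
    apply: (proj2 (HF n)); last exact: ball_open.
    exists x => /=; rewrite (proj2 (let: And4 h _ _ _ := hd in h x x) erefl).
    by rewrite divr_gt0.
  have [s s0 Hs] := @open_rad R X d hd (F n) w (proj1 (HF n)) Fw.
  exists (w, Num.min (s / 2) (r / 2)) => _ /=; split.
    by rewrite lt_min !divr_gt0.
  move=> v; rewrite le_min => /andP[h1 h2]; split.
    by apply: Hs; lra.
  have := (let: And4 _ _ h _ := hd in h) x w v; move: Bw => /= Bw; lra.
have [f Hf] := choice step.
pose s := fix s n := match n with 0%N => (z, 1 : R) | k.+1 => f (k, s k) end.
have spos : forall n, 0 < (s n).2.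
  elim=> [|n IH] /=; first exact: ltr01.
  by have [] := Hf (n, s n) IH.
pose C n := [set w | d (s n).1 w <= (s n).2].
have Csub : forall n, C n.+1 `<=` C n /\ C n.+1 `<=` F n.
  move=> n; have [_ H] := Hf (n, s n) (spos n).
  by split => w /H [].
have Cdec : forall n k, (n <= k)%N -> C k `<=` C n.
  move=> n; elim=> [|k IH]; first by rewrite leqn0 => /eqP ->.
  rewrite leq_eqVlt => /orP[/eqP -> //|]; rewrite ltnS => /IH.
  by move=> H; apply: subset_trans H; exact: (proj1 (Csub k)).
have Cne : forall n, C n !=set0.
  move=> n; exists (s n).1; rewrite /C /= (proj2 (let: And4 h _ _ _ := hd in h _ _) erefl).
  exact: ltW.
have FF : Filter (filter_from [set: nat] C).
  apply: filter_from_filter; first by exists 0%N.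
  move=> i j _ _; exists (maxn i j) => //.
  by move=> w Hw; split; [apply: (Cdec i (maxn i j)) => //; rewrite leq_maxl|
    apply: (Cdec j (maxn i j)) => //; rewrite leq_maxr].
have PF : ProperFilter (filter_from [set: nat] C).
  by apply: filter_from_proper => i _; exact: Cne.
have [p [_ cp]] := hc _ PF (ex_intro2 _ _ 0%N I (fun _ _ => I)).
exists p => n.
apply: (proj2 (Csub n)).
apply: (@cball_closed R X d hd).
move=> B nB; apply: cp => //.
by exists n.+1.
Qed.
End Baire.

Theorem proposition4p5 (R : realType) (G X : topologicalType)
  (mul : G -> G -> G) (inv : G -> G) (e : G)
  (d : X -> X -> R) (act : G -> X -> X) (m : nat) :
  is_topological_group mul inv e ->
  hausdorff_space G -> locally_compact [set: G] ->
  is_metric_for d -> compact [set: X] ->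
  is_continuous_action mul e act ->
  minimal_action act ->
  (2 <= m)%N ->
  almost_m_equicontinuous d act m ->
  m_equicontinuous d act m.
Proof.
move=> [_ _ hinv _ _] _ _ hd hc [ha1 ham hac] hmin _ [F [HF Hsub]].
rewrite /m_equicontinuous; apply/seteqP; split => // y _.
have [x0 Hx0] := baire_pt R X d hd hc F y HF.
have Ex0 : m_equicontinuity_point d act m x0 by apply: Hsub => n _; exact: Hx0.
move=> eps eps0.
have [δ0 δ00 H0] := Ex0 eps eps0.
have δ2 : 0 < δ0 / 2 by rewrite divr_gt0.
have [w [Bw [g _ gyw]]] :
    [set v | d x0 v < δ0 / 2] `&` range (fun g => act g y) !=set0.
  apply: hmin; last exact: ball_open.
  by exists x0; rewrite /= (proj2 (let: And4 h _ _ _ := hd in h _ _) erefl).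
have := act_cont G X act g y hac _ (ball_nbhs R X d hd (act g y) (δ0/2) δ2).
move=> /(@nbhs_rad R X d hd _ y) [δ' δ'0 Hδ'].
exists δ' => // xs Hxs h.
have [i [j [ne Hd]]] := H0 (fun i => act g (xs i)) (fun i =>
   ltac:(have := Hδ' _ (Hxs i); have := (let: And4 _ _ h _ := hd in h) x0 (act g y) (act g (xs i));
         move: Bw; rewrite /= -gyw; lra)) (mul h (inv g)).
exists i, j; split => //.
have E : forall z, act (mul h (inv g)) (act g z) = act h z.
  by move=> z; rewrite ham -(ham (inv g)) (proj1 (hinv g)) ha1.
by rewrite -!E.
Qed.
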